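(* MWL is strictly more expressive than WL: every WL query is expressible in MWL, but the query ''there are two paths of different lengths from a given node $s$ to a given node $t$'' is expressible in MWL and not in WL.
   Context: Data graphs. Fix a finite alphabet $\Sigma$ and infinite data domains $\mathcal D_{\mathrm{id}}$ and $\mathcal D_{\mathrm{prop}}$. A data graph is $G=(V,E,\mathrm{id},\mathrm{dataof})$ with $V$ a finite nonempty set of nodes, $E\subseteq V\times\Sigma\times V$, $\mathrm{id}:V\to\mathcal D_{\mathrm{id}}$ injective and $\mathrm{dataof}:V\to\mathcal D_{\mathrm{prop}}$. A path is a sequence $\rho=v_0a_1v_1\cdots a_nv_n$ ($n\ge 0$) with $(v_{i-1},a_i,v_i)\in E$ for all $i$; its length is $n$, its positions are $0,\dots,n$. WL (walk logic). Path variables $\pi,\omega,\dots$ range over paths; each position variable $\ell^\pi$ has a sort $\pi$ and ranges over positions of the path assigned to $\pi$. Atoms: $E_a(\ell^\pi,m^\pi)$ ($m=\ell+1$ and the $m$-th label of the path is $a$); $\ell^\pi<m^\pi$ (same sort only); $\ell^\pi\equiv_{\mathrm{id}} n^\omega$ (the nodes at these positions are equal); $\ell^\pi\equiv_{\mathrm{data}} n^\omega$ (these nodes have equal $\mathrm{dataof}$). Closed under $\neg,\vee,\exists\ell^\pi,\exists\pi$. MWL (multi-path walk logic) is WL extended with atoms $\ell^\pi<n^\omega$ for arbitrary (possibly different) sorts $\pi,\omega$, true iff the position assigned to $\ell^\pi$ is smaller, as an integer, than the position assigned to $n^\omega$. The nodes $s,t$ are given as single-node paths (free path variables constrained to have length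 $0$). *)

(* Defs.v *)
From mathcomp Require Import all_boot.
Set Implicit Arguments.
Unset Strict Implicit.
Unset Printing Implicit Defensive.

Section WalkLogic.

Variables (Sigma : finType) (Did Dprop : Type).

Definition infinite_type (D : Type) : Prop :=
  exists f : nat -> D, injective f.

Record DataGraph := {
  node : finType;
  edge : node -> Sigma -> node -> bool;
  idof : node -> Did;
  idof_inj : injective idof;
  dataof : node -> Dprop;
  node_nonempty : 0 < #|node|
}.

(** Paths v0 a1 v1 ... an vn : start node and the list of steps (a_i, v_i). *)
Record gpath (G : DataGraph) := GPath {
  pstart : node G;
  psteps : seq (Sigma * node G)
}.

Fixpoint valid_steps (G : DataGraph) (v : node G) (st : seq (Sigma * node G)) : bool :=
  match st with
  | [::] => true
  | (a, w) :: st' => edge v a w && valid_steps w st'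
  end.

Definition valid_path (G : DataGraph) (p : gpath G) : bool :=
  valid_steps (pstart p) (psteps p).

(** length n of the path; its positions are 0..n *)
Definition plen (G : DataGraph) (p : gpath G) : nat := size (psteps p).

Definition pnode (G : DataGraph) (p : gpath G) (i : nat) : node G :=
  nth (pstart p) (pstart p :: map snd (psteps p)) i.

Definition pend (G : DataGraph) (p : gpath G) : node G :=
  last (pstart p) (map snd (psteps p)).

Definition single (G : DataGraph) (v : node G) : gpath G := GPath v [::].

(** Position variables l^pi are pairs (l, pi): name l, sort pi. *)
Definition posvar := (nat * nat)%type.

(** Syntax of MWL; WL is the fragment where every [FLt] atom has both
    variables of the same sort.
    [FE a pi l m] is E_a(l^pi, m^pi). *)
Inductive form :=
| FE : Sigma -> nat -> nat -> nat -> form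
| FLt : posvar -> posvar -> form
| FEqId : posvar -> posvar -> form
| FEqData : posvar -> posvar -> form
| FNot : form -> form
| FOr : form -> form -> form
| FExPos : posvar -> form -> form
| FExPath : nat -> form -> form.

Fixpoint isWL (phi : form) : bool :=
  match phi with
  | FLt x y => x.2 == y.2
  | FNot f => isWL f
  | FOr f g => isWL f && isWL g
  | FExPos _ f => isWL f
  | FExPath _ f => isWL f
  | _ => true
  end.

(** Well-formedness: every position variable used is in scope, its sort is
    a path variable in scope; quantifying a path variable pi takes all
    position variables of sort pi out of scope (their sort is rebound). *)
Fixpoint wf (Gp : seq nat) (Gl : seq posvar) (phi : form) : bool :=
  match phi with
  | FE _ pi l m => (pi \in Gp) && ((l, pi) \in Gl) && ((m, pi) \in Gl)
  | FLt x y => (x \in Gl) && (y \in Gl)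
  | FEqId x y => (x \in Gl) && (y \in Gl)
  | FEqData x y => (x \in Gl) && (y \in Gl)
  | FNot f => wf Gp Gl f
  | FOr f g => wf Gp Gl f && wf Gp Gl g
  | FExPos x f => (x.2 \in Gp) && wf Gp (x :: Gl) f
  | FExPath pi f => wf (pi :: Gp) [seq x <- Gl | x.2 != pi] f
  end.

Definition updp (G : DataGraph) (rho : nat -> gpath G) (pi : nat) (p : gpath G) :=
  fun w => if w == pi then p else rho w.

Definition updl (sg : posvar -> nat) (x : posvar) (k : nat) :=
  fun y => if y == x then k else sg y.

Fixpoint sat (G : DataGraph) (rho : nat -> gpath G) (sg : posvar -> nat)
    (phi : form) : Prop :=
  match phi with
  | FE a pi l m =>
      sg (m, pi) = (sg (l, pi)).+1 /\
      onth (map fst (psteps (rho pi))) (sg (l, pi)) = Some a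
  | FLt x y => sg x < sg y
  | FEqId x y => pnode (rho x.2) (sg x) = pnode (rho y.2) (sg y)
  | FEqData x y => dataof (pnode (rho x.2) (sg x)) = dataof (pnode (rho y.2) (sg y))
  | FNot f => ~ sat rho sg f
  | FOr f g => sat rho sg f \/ sat rho sg g
  | FExPos x f => exists k, k <= plen (rho x.2) /\ sat rho (updl sg x k) f
  | FExPath pi f => exists p : gpath G, valid_path p /\ sat (updp rho pi p) sg f
  end.

Definition query := forall G : DataGraph, node G -> node G -> Prop.

(** Initial assignment: path variable 0 is s, path variable 1 is t, both as
    single-node paths (other path variables are never free in a
    well-formed closed query formula). *)
Definition init_env (G : DataGraph) (s t : node G) : nat -> gpath G :=
  fun pi => if pi == 0 then single s else single t.

(** Q is expressible in the fragment [frag] (isWL for WL, all formulas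
    for MWL) iff some formula of the fragment, whose only free variables
    are the path variables s (=0) and t (=1), defines Q. *)
Definition expressible (frag : form -> bool) (Q : query) : Prop :=
  exists phi : form,
    [&& frag phi & wf [:: 0; 1] [::] phi] /\
    forall (G : DataGraph) (s t : node G),
      sat (init_env s t) (fun _ => 0) phi <-> Q G s t.

Definition WL_expressible (Q : query) := expressible isWL Q.
Definition MWL_expressible (Q : query) := expressible (fun _ => true) Q.

Definition two_paths_diff_len : query :=
  fun G s t => exists p q : gpath G,
    [/\ valid_path p, valid_path q, pstart p = s, pend p = t &
     [/\ pstart q = s, pend q = t & plen p <> plen q]].

End WalkLogic.

(* Main.v *)
Require Import Defs.
From mathcomp Require Import all_boot zify.
From Stdlib Require Import Classical.
Set Implicit Arguments. Unset Strict Implicit. Unset Printing Implicit Defensive.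


Definition close (T a b a' b' : nat) :=
  (b + a' = b' + a /\ b < a + T /\ a < b + T) \/ (a + T <= b /\ a' + T <= b') \/ (b + T <= a /\ b' + T <= a').
Lemma arc1 (xa ya xu yu x0 d T : nat) :
 close (2*T) xa xu ya yu -> x0 = xa + d -> d < T -> (xu <= x0 -> xu <= xa) ->
 close T x0 xu (ya + d) yu.
Proof. rewrite /close => H ? ? ?; lia. Qed.
Lemma arc2 (xb yb xu yu x0 y0 d T : nat) :
 close (2*T) xb xu yb yu -> xb = x0 + d -> yb = y0 + d -> d < T -> (x0 <= xu -> xb <= xu) ->
 close T x0 xu y0 yu.
Proof. rewrite /close => H ? ? ? ?; lia. Qed.
Lemma arc3 (xa ya xb yb xu yu x0 T : nat) :
 0 < T -> close (2*T) xa xb ya yb -> close (2*T) xa xu ya yu -> close (2*T) xb xu yb yu ->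
 xa + T <= x0 -> x0 + T <= xb -> (xu <= x0 -> xu <= xa) -> (x0 <= xu -> xb <= xu) ->
 close T x0 xu (ya + T) yu.
Proof. rewrite /close => ? H1 H2 H3 ? ? ? ?; lia. Qed.

Lemma close_sym T a b a' b' : close T a b a' b' -> close T b a b' a'.
Proof. rewrite /close; lia. Qed.
Lemma close_weak T T' a b a' b' : close T a b a' b' -> T' <= T -> close T' a b a' b'.
Proof. rewrite /close; lia. Qed.
Lemma close_refl T a a' : 0 < T -> close T a a a' a'.
Proof. rewrite /close; lia. Qed.

Definition Dr (I : Type) (P : I -> Prop) (x y : I -> nat) (T : nat) :=
  forall u v, P u -> P v -> close T (x u) (x v) (y u) (y v).

Lemma Dr_weak I (P : I -> Prop) x y T T' : Dr P x y T -> T' <= T -> Dr P x y T'.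
Proof. move=> H le u v Pu Pv; exact: close_weak (H u v Pu Pv) le. Qed.

Lemma Dr_map I J (P : I -> Prop) (Q : J -> Prop) x y x' y' (f : J -> I) T :
  Dr P x y T -> (forall w, Q w -> [/\ P (f w), x' w = x (f w) & y' w = y (f w)]) ->
  Dr Q x' y' T.
Proof.
move=> H Hf u v Qu Qv; have [Pu -> ->] := Hf u Qu; have [Pv -> ->] := Hf v Qv.
exact: H.
Qed.

Lemma ex_max_c (P : nat -> Prop) v0 B : P v0 -> (forall v, P v -> v <= B) ->
  exists v, P v /\ forall w, P w -> w <= v.
Proof.
move=> Pv0 HB; move: {2}(B - v0) (leqnn (B - v0)) => k; elim: k v0 Pv0 => [|k IH] v0 Pv0 hk.
  exists v0; split=> // w Pw; have := HB w Pw; have := HB v0 Pv0; lia.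
case: (classic (exists w, P w /\ v0 < w)) => [[w [Pw lt]]|nex].
  apply: (IH w Pw); have := HB w Pw; lia.
exists v0; split=> // w Pw; case: (leqP w v0) => // lt; exfalso; apply: nex; by exists w.
Qed.

Lemma ex_min_c (P : nat -> Prop) v0 : P v0 ->
  exists v, P v /\ forall w, P w -> v <= w.
Proof.
move: {2}v0 (leqnn v0) => k; elim: k v0 => [|k IH] v0 hk Pv0.
  exists v0; split=> // w Pw; lia.
case: (classic (exists w, P w /\ w < v0)) => [[w [Pw lt]]|nex].
  apply: (IH w) => //; lia.
exists v0; split=> // w Pw; case: (leqP v0 w) => // lt; exfalso; apply: nex; by exists w.
Qed.


Definition ox I (x : I -> nat) (x0 : nat) (o : option I) :=
  if o is Some u then x u else x0.
Definition oP I (P : I -> Prop) (o : option I) :=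
  if o is Some u then P u else True.

Lemma ext I (P : I -> Prop) x y T x0 lo hi : 0 < T -> P lo -> P hi ->
  x lo <= x0 <= x hi -> Dr P x y (2 * T) ->
  exists y0, y lo <= y0 <= y hi /\ Dr (oP P) (ox x x0) (ox y y0) T.
Proof.
move=> T0 Plo Phi /andP[h1 h2] D.
have [va [[a [Pa [xa ha]]] amax]] := ex_max_c (P := fun v => exists u, P u /\ x u = v /\ v <= x0) (v0 := x lo) (B := x0)
   (ltac:(by exists lo)) (ltac:(by move=> v [u [_ [_ ?]]])).
have [vb [[b [Pb [xb hb]]] bmin]] := ex_min_c (P := fun v => exists u, P u /\ x u = v /\ x0 <= v) (v0 := x hi)
   (ltac:(by exists hi)).
subst va vb.
have amax' : forall u, P u -> x u <= x0 -> x u <= x a.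
  by move=> u Pu le; apply: amax; exists u.
have bmin' : forall u, P u -> x0 <= x u -> x b <= x u.
  by move=> u Pu le; apply: bmin; exists u.
have alo := amax' lo Plo h1; have bhi := bmin' hi Phi h2.
have Dab := D a b Pa Pb; have Dla := D lo a Plo Pa; have Dbh := D b hi Pb Phi.
have Dlb := D lo b Plo Pb.
have yla : y lo <= y a by move: Dla; rewrite /close; lia.
have ybh : y b <= y hi by move: Dbh; rewrite /close; lia.
have yab : y a <= y b by move: Dab; rewrite /close; lia.
have key : exists y0, y a <= y0 <= y b /\ forall u, P u ->
    close T x0 (x u) y0 (y u).
  case: (ltnP (x0 - x a) T) => c1.
    have [d hd] : exists d, x0 = x a + d by exists (x0 - x a); lia.
    exists (y a + d); split; first by move: Dab; rewrite /close; lia.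
    move=> u Pu; apply: (arc1 (D a u Pa Pu) hd) => //; first lia.
    by apply: amax'.
  case: (ltnP (x b - x0) T) => c2.
    have [d hd] : exists d, x b = x0 + d by exists (x b - x0); lia.
    have [y0 hy0] : exists y0, y b = y0 + d.
      exists (y b - d); move: Dlb; rewrite /close; lia.
    exists y0; split; first by move: Dab; rewrite /close; lia.
    move=> u Pu; apply: (arc2 (D b u Pb Pu) hd hy0) => //; first lia.
    by apply: bmin'.
  exists (y a + T); split; first by move: Dab; rewrite /close; lia.
  move=> u Pu; apply: (arc3 T0 Dab (D a u Pa Pu) (D b u Pb Pu)); try lia.
    by apply: amax'.
  by apply: bmin'.
case: key => y0 [hy Hu]; exists y0; split; first lia.
case=> [u|] [v|] /= Pu Pv.
- apply: (close_weak (D u v Pu Pv)); lia.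
- exact/close_sym/Hu.
- exact: Hu.
- exact: close_refl.
Qed.


Section Graph.
Variables (Sigma : finType) (Did Dprop : Type) (c0 : Sigma) (fid : nat -> Did)
  (fid_inj : injective fid) (d0 : Dprop).

Definition lenc (n m : nat) (c : bool) := if c then n else m.
Definition posn (n m : nat) (c : bool) (j : nat) : nat :=
  if c then j else (if j == 0 then 0 else if j == m then n else n + j).
Definition Hnode (n m : nat) := 'I_(n + m).-1.+1.
Definition pos n m c j : Hnode n m := inord (posn n m c j).

Definition Hedge n m (u : Hnode n m) (a : Sigma) (v : Hnode n m) : bool :=
  (a == c0) && [exists c : bool, exists j : 'I_(n + m),
     (j < lenc n m c) && (pos n m c j == u) && (pos n m c j.+1 == v)].

Lemma Hid_inj n m : injective (fun v : Hnode n m => fid (val v)).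
Proof. by move=> u v /fid_inj /val_inj. Qed.

Lemma Hnonempty n m : 0 < #|Hnode n m|.
Proof. by rewrite card_ord. Qed.

Definition HG n m : DataGraph Sigma Did Dprop :=
  @Build_DataGraph Sigma Did Dprop (Hnode n m) (@Hedge n m) _ (@Hid_inj n m)
    (fun _ => d0) (@Hnonempty n m).

Variables (n m : nat) (n0 : 0 < n) (m0 : 0 < m).

Lemma posn_lt c j : j <= lenc n m c -> posn n m c j <= (n + m).-1.
Proof.
rewrite /posn /lenc -subn1; case: c => hj; first lia.
case: eqP => ?; first lia. case: eqP => ?; lia.
Qed.

Lemma val_pos c j : j <= lenc n m c -> val (pos n m c j) = posn n m c j.
Proof. by move=> hj; rewrite /pos /= inordK // ltnS posn_lt. Qed.

Lemma pos_inj c j c' j' : j <= lenc n m c -> j' <= lenc n m c' ->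
  (pos n m c j = pos n m c' j') <->
  ((c = c' /\ j = j') \/ (j = 0 /\ j' = 0) \/ (j = lenc n m c /\ j' = lenc n m c')).
Proof.
move=> hj hj'; split.
  move/(congr1 val); rewrite !val_pos //; move: hj hj'; rewrite /posn /lenc.
  by case: c; case: c'; do ?case: eqP; lia.
case=> [[-> ->]//|[[-> ->]|[-> ->]]]; apply: val_inj; rewrite !val_pos //;
  move: hj hj'; rewrite /posn /lenc; by case: c; case: c'; do ?case: eqP; lia.
Qed.

Lemma pos_surj (v : Hnode n m) : exists c j, j <= lenc n m c /\ v = pos n m c j.
Proof.
have hv : val v < n + m.
  have K : forall k, k < (n + m).-1.+1 -> k < n + m by move=> k; rewrite -subn1; lia.
  exact: K (ltn_ord v).
case: (leqP (val v) n) => h.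
  exists true, (val v); split=> //; apply: val_inj; rewrite val_pos //.
exists false, (val v - n); split.
  move: hv; rewrite /lenc; lia.
apply: val_inj; rewrite val_pos; last by move: hv; rewrite /lenc; lia.
rewrite /posn; move: hv; do ?case: eqP; lia.
Qed.

Lemma HedgeP (u v : Hnode n m) a : Hedge u a v <->
  (a = c0 /\ exists c j, j < lenc n m c /\ u = pos n m c j /\ v = pos n m c j.+1).
Proof.
rewrite /Hedge; split.
  case/andP=> /eqP -> /existsP [c /existsP [j /andP[/andP[hj /eqP hu] /eqP hv]]].
  by split=> //; exists c, j.
case=> -> [c [j [hj [hu hv]]]]; rewrite eqxx /=; apply/existsP; exists c.
apply/existsP; have hj2 : j < n + m by move: hj; rewrite /lenc; case: (c); lia.
exists (Ordinal hj2) => /=; rewrite hj hu hv !eqxx //.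
Qed.


Definition hrep (p : gpath (HG n m)) c o :=
  [/\ o + plen p <= lenc n m c,
      (forall k, k <= plen p -> pnode p k = pos n m c (o + k)) &
      all (fun st => st.1 == c0) (psteps p)].

Lemma steps_repr (st : seq (Sigma * node (HG n m))) : forall (v : node (HG n m)) c j,
  valid_steps v st -> v = pos n m c j -> j <= lenc n m c ->
  (0 < j \/ st = [::] \/ exists a st', st = (a, pos n m c j.+1) :: st') ->
  [/\ j + size st <= lenc n m c,
      (forall k, k <= size st -> nth v (v :: map snd st) k = pos n m c (j + k)) &
      all (fun st => st.1 == c0) st].
Proof.
elim: st => [|[a w] st IH] v c j /=.
  move=> _ -> hj _; split=> //; first lia.
  by move=> k; rewrite leqn0 => /eqP ->; rewrite addn0.
case/andP=> /HedgeP [-> [c' [j' [hj' [hv hw]]]]] Hst ev hj cond.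
have hj'' : j' <= lenc n m c' by lia.
have E := (pos_inj hj hj''); rewrite -ev hv in E.
have [hlt hw2] : j < lenc n m c /\ w = pos n m c j.+1.
  case: cond => [jpos|[//|[a' [st' [_ -> _]]]]].
    case: (proj1 E erefl) => [[-> ->]//|[[? ?]|[? ?]]]; lia.
  split=> //; case: (proj1 E erefl) => [[-> ->]//|[[-> ?]|[? ?]]]; try lia.
  by move: n0 m0; rewrite /lenc; case: (c); lia.
have [IH1 IH2 IH3] := IH w c j.+1 Hst hw2 hlt (or_introl (ltn0Sn j)).
split; [by rewrite addnS -addSn | | by rewrite eqxx].
case=> [|k] hk /=; first by rewrite addn0.
rewrite (set_nth_default w); last by rewrite /= size_map; lia.
by rewrite IH2 ?addSnnS //; lia.
Qed.

Lemma valid_repr (p : gpath (HG n m)) : valid_path p -> exists c o, hrep p c o.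
Proof.
case: p => v st; rewrite /valid_path /hrep /plen /pnode /=.
case: st => [|[a w] st] /=.
  move=> _; have [c [j [hj ->]]] := pos_surj v; exists c, j; split=> //; first lia.
  by move=> k; rewrite leqn0 => /eqP ->; rewrite addn0.
move=> H; case/andP: (H) => /HedgeP [ea [c' [j' [hj' [hv hw]]]]] _; subst a.
exists c', j'.
have cond : 0 < j' \/ (c0, w) :: st = [::] \/
   exists a' st', (c0, w) :: st = (a', pos n m c' j'.+1) :: st'.
  by right; right; exists c0, st; rewrite hw.
have [h1 h2 h3] := @steps_repr ((c0, w) :: st) v c' j' H hv (ltnW hj') cond.
by split.
Qed.

Lemma mk_path c o L : o + L <= lenc n m c ->
  exists p : gpath (HG n m), [/\ valid_path p, hrep p c o & plen p = L].
Proof.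
move=> hL.
pose st := [seq (c0, pos n m c k.+1) | k <- iota o L].
exists (@GPath _ _ _ (HG n m) (pos n m c o) st).
have vs : forall L' o', o' + L' <= lenc n m c ->
    valid_steps (G := HG n m) (pos n m c o') [seq (c0, pos n m c k.+1) | k <- iota o' L'].
  elim=> [|L' IH] o' h //=.
  apply/andP; split; last by apply: IH; lia.
  apply/HedgeP; split=> //; exists c, o'; split=> //; lia.
rewrite /valid_path /hrep /plen /pnode /= /st size_map size_iota; split=> //.
  exact: vs.
- split=> //.
    case=> [|k] hk /=; first by rewrite addn0.
    rewrite -map_comp (nth_map o) ?size_iota //= nth_iota //; congr pos; lia.
  by apply/allP=> x /mapP [k _ ->].
Qed.
End Graph.

Lemma pendE Sigma Did Dprop (G : DataGraph Sigma Did Dprop) (p : gpath G) :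
  pend p = pnode p (plen p).
Proof.
rewrite /pend /pnode /plen.
have := nth_last (pstart p) (pstart p :: map snd (psteps p)).
by rewrite /= size_map.
Qed.

Lemma onth_c0 (S : eqType) (a c : S) (T : Type) (s : seq (S * T)) k :
  all (fun st => st.1 == c) s ->
  (onth (map fst s) k = Some a <-> a = c /\ k < size s).
Proof.
elim: s k => [|[x y] s IH] [|k] //=.
- by split=> [|[]].
- by split=> [|[]].
- case/andP=> /eqP -> _; split=> [[<-]|[-> _]] //.
- case/andP=> _ /IH ->; by [].
Qed.



Inductive pt := PS of nat | PE of nat | PP of posvar | PZ of bool | PL of bool.

Definition inP (Gp : seq nat) (Gl : seq posvar) (u : pt) : Prop :=
  match u with PS p | PE p => p \in Gp | PP x => x \in Gl | _ => True end.
Definition chn (ch : nat -> bool) (u : pt) : bool :=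
  match u with PS p | PE p => ch p | PP x => ch x.2 | PZ c | PL c => c end.

Lemma close_swap T a b a' b' : close T a b a' b' -> close T a' b' a b.
Proof. rewrite /close; lia. Qed.

Section Main.
Variables (Sigma : finType) (Did Dprop : Type) (c0 : Sigma) (fid : nat -> Did)
  (fid_inj : injective fid) (d0 : Dprop).

Local Notation G n m := (HG c0 fid_inj d0 n m).

Definition idx n m (rho : nat -> gpath (G n m)) (sg : posvar -> nat) (o : nat -> nat) (u : pt) :=
  match u with
  | PS p => o p | PE p => o p + plen (rho p) | PP x => o x.2 + sg x
  | PZ _ => 0 | PL c => lenc n m c end.

Definition Rel n1 m1 n2 m2 T Gp Gl (rho1 : nat -> gpath (G n1 m1)) sg1
   (rho2 : nat -> gpath (G n2 m2)) sg2 : Prop :=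
  exists ch o1 o2,
  [/\ forall p, p \in Gp -> hrep (rho1 p) (ch p) (o1 p) /\ hrep (rho2 p) (ch p) (o2 p),
      forall x, x \in Gl -> [/\ x.2 \in Gp, sg1 x <= plen (rho1 x.2) & sg2 x <= plen (rho2 x.2)] &
      forall c, Dr (fun u => inP Gp Gl u /\ chn ch u = c) (idx rho1 sg1 o1) (idx rho2 sg2 o2) T].

Lemma Rel_sym n1 m1 n2 m2 T Gp Gl (rho1 : nat -> gpath (G n1 m1)) sg1
   (rho2 : nat -> gpath (G n2 m2)) sg2 :
  Rel T Gp Gl rho1 sg1 rho2 sg2 -> Rel T Gp Gl rho2 sg2 rho1 sg1.
Proof.
case=> ch [o1 [o2 [H1 H2 H3]]]; exists ch, o2, o1; split.
- by move=> p /H1 [? ?]; split.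
- by move=> x /H2 [? ? ?]; split.
- move=> c u v Pu Pv; apply: close_swap; exact: (H3 c u v Pu Pv).
Qed.

Lemma Rel_weak n1 m1 n2 m2 T T' Gp Gl (rho1 : nat -> gpath (G n1 m1)) sg1
   (rho2 : nat -> gpath (G n2 m2)) sg2 :
  Rel T Gp Gl rho1 sg1 rho2 sg2 -> T' <= T -> Rel T' Gp Gl rho1 sg1 rho2 sg2.
Proof.
case=> ch [o1 [o2 [H1 H2 H3]]] le; exists ch, o1, o2; split=> // c.
exact: Dr_weak (H3 c) le.
Qed.

Lemma step_pos n1 m1 n2 m2 T Gp Gl (rho1 : nat -> gpath (G n1 m1)) sg1
   (rho2 : nat -> gpath (G n2 m2)) sg2 x k :
  0 < T -> Rel (2 * T) Gp Gl rho1 sg1 rho2 sg2 -> x.2 \in Gp -> k <= plen (rho1 x.2) ->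
  exists k2, k2 <= plen (rho2 x.2) /\
    Rel T Gp (x :: Gl) rho1 (updl sg1 x k) rho2 (updl sg2 x k2).
Proof.
case: x => l p /=.
move=> T0 [ch [o1 [o2 [Hr Hl Hd]]]] hx hk.
pose P := fun u => inP Gp Gl u /\ chn ch u = ch p.
have PS' : P (PS p) by [].
have PE' : P (PE p) by [].
have [y0 [hy Dn]] := ext (x := idx rho1 sg1 o1) (y := idx rho2 sg2 o2) (x0 := o1 p + k) T0 PS' PE' (ltac:(rewrite /idx; apply/andP; split; lia)) (Hd (ch p)).
move: hy; rewrite /idx => /andP [hy1 hy2].
exists (y0 - o2 p); split; first lia.
exists ch, o1, o2; split=> //.
  move=> z; rewrite inE /updl; case: (z =P (l, p)) => [-> _|ne /= zin]; last exact: Hl.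
  by rewrite /=; split=> //; lia.
move=> c; case: (c =P ch p) => [->|ne].
  apply: (Dr_map Dn (f := fun w => match w with
     | PP z => if z == (l, p) then None else Some w | _ => Some w end)).
  case=> [q|q|z|b|b] [/= Iw Cw] //.
  rewrite /updl; case: (z =P (l, p)) => [->|ne] /=.
    split=> //; lia.
  by rewrite inE in Iw; case/orP: Iw => [/eqP//|Iw].
apply: (Dr_map (Dr_weak (Hd c) (ltac:(lia) : T <= 2 * T)) (f := id)).
case=> [q|q|z|b|b] [/= Iw Cw] //.
rewrite /updl; case: (z =P (l, p)) => [ez|nz] /=.
  by exfalso; apply: ne; rewrite -Cw ez.
by rewrite inE in Iw; case/orP: Iw => [/eqP//|Iw].
Qed.


Lemma step_path n1 m1 n2 m2 (n10 : 0 < n1) (m10 : 0 < m1) (n20 : 0 < n2) (m20 : 0 < m2)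
   T Gp Gl (rho1 : nat -> gpath (G n1 m1)) sg1 (rho2 : nat -> gpath (G n2 m2)) sg2 p q1 :
  0 < T -> Rel (4 * T) Gp Gl rho1 sg1 rho2 sg2 -> valid_path q1 ->
  exists q2, valid_path q2 /\
    Rel T (p :: Gp) [seq x <- Gl | x.2 != p] (updp rho1 p q1) sg1 (updp rho2 p q2) sg2.
Proof.
move=> T0 [ch [o1 [o2 [Hr Hl Hd]]]] vq.
have [c [i [hq1 hq2 hq3]]] := valid_repr n10 m10 vq.
set L := plen q1 in hq1 hq2.
set Gl' := [seq x <- Gl | x.2 != p].
set Gp_ := [seq s <- Gp | s != p].
pose P1 := fun u => inP Gp_ Gl' u /\ chn ch u = c.
have D1 : Dr P1 (idx rho1 sg1 o1) (idx rho2 sg2 o2) (2 * (2 * T)).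
  apply: (Dr_map (Dr_weak (Hd c) (ltac:(lia) : 2 * (2 * T) <= 4 * T)) (f := id)).
  case=> [s|s|z|b|b] [/= Iw Cw] //; split=> //; split=> //;
    by move: Iw; rewrite mem_filter => /andP [].
have PZ1 : P1 (PZ c) by [].
have PL1 : P1 (PL c) by [].
have [y0i [hyi D2]] := ext (x := idx rho1 sg1 o1) (y := idx rho2 sg2 o2) (x0 := i)
   (ltac:(lia) : 0 < 2 * T) PZ1 PL1 (ltac:(rewrite /idx; apply/andP; split; lia)) D1.
move: hyi; rewrite /idx => /andP [_ hyi].
have PN : oP P1 None by [].
have PL2 : oP P1 (Some (PL c)) by [].
have [y0e [hye D3]] := ext (x := ox (idx rho1 sg1 o1) i) (y := ox (idx rho2 sg2 o2) y0i)
   (x0 := i + L) T0 PN PL2 (ltac:(rewrite /= /idx; apply/andP; split; lia)) D2.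
move: hye; rewrite /= /idx => /andP [hye1 hye2].
have [q2 [vq2 [hr1 hr2 hr3] hl2]] := mk_path c0 fid_inj d0 n20 m20 (c := c) (o := y0i) (L := y0e - y0i)
   (ltac:(lia)).
exists q2; split=> //.
exists (fun s => if s == p then c else ch s), (fun s => if s == p then i else o1 s),
  (fun s => if s == p then y0i else o2 s); split.
- move=> s; rewrite inE /updp; case: (s =P p) => [-> _|ne /= sin]; last exact: Hr.
  by split; split.
- move=> x; rewrite mem_filter => /andP [xp xin].
  rewrite /updp (negbTE xp); have [? ? ?] := Hl x xin; split=> //.
  by rewrite inE; apply/orP; right.
move=> c'; case: (c' =P c) => [->|ne].
  apply: (Dr_map D3 (f := fun w => match w with
     | PE s => if s == p then None else Some (Some w)
     | PS s => if s == p then Some None else Some (Some w)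
     | _ => Some (Some w) end)).
  case=> [s|s|z|b|b] [/= Iw Cw] //.
    case: (s =P p) => [ep|ne] /=; first by subst s.
    rewrite (introF eqP ne) in Cw; split=> //; split=> //.
    by rewrite /= mem_filter; apply/andP; split; [apply/eqP|rewrite inE (introF eqP ne) in Iw].
  - rewrite /updp; case: (s =P p) => [ep|ne] /=; first by subst s; rewrite hl2; split=> //; lia.
    rewrite (introF eqP ne) in Cw; split=> //; split=> //.
    by rewrite /= mem_filter; apply/andP; split; [apply/eqP|rewrite inE (introF eqP ne) in Iw].
  - move: (Iw); rewrite mem_filter => /andP [zp zin].
    by rewrite (negbTE zp) in Cw *.
apply: (Dr_map (Dr_weak (Hd c') (ltac:(lia) : T <= 4 * T)) (f := id)).
case=> [s|s|z|b|b] [/= Iw Cw] //.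
- case: (s =P p) => [ep|nep]; first by subst s; rewrite eqxx in Cw; case: ne; rewrite Cw.
  rewrite (introF eqP nep) in Cw; split=> //; split=> //.
  by rewrite inE (introF eqP nep) in Iw.
- rewrite /updp; case: (s =P p) => [ep|nep]; first by subst s; rewrite eqxx in Cw; case: ne; rewrite Cw.
  rewrite (introF eqP nep) in Cw; split=> //; split=> //.
  by rewrite inE (introF eqP nep) in Iw.
- move: (Iw); rewrite mem_filter => /andP [zp zin].
  by rewrite (negbTE zp) in Cw *.
Qed.


Lemma onth_plen n m (q : gpath (G n m)) k a :
  all (fun st => st.1 == c0) (psteps q) ->
  (onth (map fst (psteps q)) k = Some a <-> a = c0 /\ k < plen q).
Proof. exact: onth_c0. Qed.

Lemma eqid_arith (B : Prop) T ix iy lx ly ix' iy' lx' ly' : 2 <= T ->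
  close T 0 ix 0 ix' -> close T 0 iy 0 iy' -> close T ix lx ix' lx' -> close T iy ly iy' ly' ->
  (B -> close T ix iy ix' iy') ->
  ((B /\ ix = iy) \/ (ix = 0 /\ iy = 0) \/ (ix = lx /\ iy = ly)) ->
  ((B /\ ix' = iy') \/ (ix' = 0 /\ iy' = 0) \/ (ix' = lx' /\ iy' = ly')).
Proof.
move=> T2 h1 h2 h3 h4 h5 [[b e]|[[e1 e2]|[e1 e2]]].
- left; split=> //; have := h5 b; move: e; rewrite /close; lia.
- right; left; move: h1 h2; rewrite /close; lia.
- right; right; move: h3 h4; rewrite /close; lia.
Qed.

Fixpoint rank (f : form Sigma) : nat :=
  match f with
  | FNot g => rank g
  | FOr g h => maxn (rank g) (rank h)
  | FExPos _ g | FExPath _ g => (rank g).+1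
  | _ => 0
  end.

Lemma pnode_rep n m (n0 : 0 < n) (m0 : 0 < m) (q : gpath (G n m)) c o k :
  hrep q c o -> k <= plen q -> pnode q k = pos n m c (o + k).
Proof. by case=> _ H _ /H. Qed.

Lemma main_inv (f : form Sigma) : isWL f ->
  forall n1 m1 n2 m2, 0 < n1 -> 0 < m1 -> 0 < n2 -> 0 < m2 ->
  forall T Gp Gl (rho1 : nat -> gpath (G n1 m1)) sg1 (rho2 : nat -> gpath (G n2 m2)) sg2,
  2 * 4 ^ rank f <= T -> wf Gp Gl f -> Rel T Gp Gl rho1 sg1 rho2 sg2 ->
  (sat rho1 sg1 f <-> sat rho2 sg2 f).
Proof.
elim: f => [a p l m|x y|x y|x y|f IH|f IHf g IHg|x f IH|p f IH] /= WL
  n1 m1 n2 m2 n10 m10 n20 m20 T Gp Gl rho1 sg1 rho2 sg2 hT.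
- case/andP => /andP [pin lin] min [ch [o1 [o2 [Hr Hl Hd]]]].
  have [[_ _ L1] [_ _ L2]] := Hr p pin.
  rewrite (onth_plen _ _ L1) (onth_plen _ _ L2).
  have h1 := Hd (ch p) (PP (l, p)) (PP (m, p)) (conj lin erefl) (conj min erefl).
  have h2 := Hd (ch p) (PP (l, p)) (PE p) (conj lin erefl) (conj pin erefl).
  move: h1 h2; rewrite /close /idx /= => h1 h2.
  split=> [[e [ea lt]]|[e [ea lt]]]; (split; [lia|split=> //; lia]).
- case/andP=> xin yin [ch [o1 [o2 [Hr Hl Hd]]]].
  move: x y WL xin yin => [l p] [l' p'] /= /eqP <- xin yin.
  have h1 := Hd (ch p) (PP (l, p)) (PP (l', p)) (conj xin erefl) (conj yin erefl).
  move: h1; rewrite /close /idx /= => h1; lia.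
- case/andP=> xin yin [ch [o1 [o2 [Hr Hl Hd]]]].
  have [xp bx1 bx2] := Hl x xin; have [yp by1 by2] := Hl y yin.
  have [hx1 hx2] := Hr _ xp; have [hy1 hy2] := Hr _ yp.
  rewrite (pnode_rep n10 m10 hx1 bx1) (pnode_rep n10 m10 hy1 by1).
  rewrite (pnode_rep n20 m20 hx2 bx2) (pnode_rep n20 m20 hy2 by2).
  case: hx1 hx2 hy1 hy2 => [hx1 _ _] [hx2 _ _] [hy1 _ _] [hy2 _ _].
  rewrite !pos_inj //; try lia.

  have z1 := Hd (ch x.2) (PZ (ch x.2)) (PP x) (conj I erefl) (conj xin erefl).
  have z2 := Hd (ch y.2) (PZ (ch y.2)) (PP y) (conj I erefl) (conj yin erefl).
  have l1 := Hd (ch x.2) (PP x) (PL (ch x.2)) (conj xin erefl) (conj I erefl).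
  have l2 := Hd (ch y.2) (PP y) (PL (ch y.2)) (conj yin erefl) (conj I erefl).
  have b1 : ch x.2 = ch y.2 -> close T (idx rho1 sg1 o1 (PP x)) (idx rho1 sg1 o1 (PP y))
                                   (idx rho2 sg2 o2 (PP x)) (idx rho2 sg2 o2 (PP y)).
    by move=> e; apply: (Hd (ch x.2)); split.
  have T2 : 2 <= T by move: hT; rewrite expn0; lia.
  move: z1 z2 l1 l2 b1; rewrite /idx /= => z1 z2 l1 l2 b1.
  split; apply: (eqid_arith (T := T)) => //; try by apply: close_swap.
  by move=> e; apply: close_swap; apply: b1.
- by move=> _ _; split.
- move=> W R; split=> H1 H2; apply: H1; by [apply/(IH WL _ _ _ _ _ _ _ _ _ _ _ _ _ _ _ hT W R) | apply/(IH WL _ _ _ _ _ _ _ _ _ _ _ _ _ _ _ hT W R)].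
- case/andP: WL => W1 W2; case/andP => V1 V2 R.
  have hTf : 2 * 4 ^ rank f <= T by apply: leq_trans hT; apply: leq_mul => //; apply: leq_pexp2l => //; exact: leq_maxl.
  have hTg : 2 * 4 ^ rank g <= T by apply: leq_trans hT; apply: leq_mul => //; apply: leq_pexp2l => //; exact: leq_maxr.
  rewrite (IHf W1 _ _ _ _ n10 m10 n20 m20 _ _ _ _ _ _ _ hTf V1 R).
  by rewrite (IHg W2 _ _ _ _ n10 m10 n20 m20 _ _ _ _ _ _ _ hTg V2 R).
- case/andP=> xp V R.
  have T0 : 0 < 2 * 4 ^ rank f by rewrite muln_gt0 expn_gt0.
  have hT' : 2 * (2 * 4 ^ rank f) <= T by move: hT; rewrite expnS; lia.
  split=> [[k [hk S]]|[k [hk S]]].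
    have [k2 [hk2 R2]] := step_pos T0 (Rel_weak R hT') xp hk.
    exists k2; split=> //.
    by apply/(IH WL _ _ _ _ n10 m10 n20 m20 _ _ _ _ _ _ _ (leqnn _) V R2).
  have [k2 [hk2 R2]] := step_pos T0 (Rel_sym (Rel_weak R hT')) xp hk.
  exists k2; split=> //.
  by apply/(IH WL _ _ _ _ n10 m10 n20 m20 _ _ _ _ _ _ _ (leqnn _) V (Rel_sym R2)).
- move=> V R.
  have T0 : 0 < 2 * 4 ^ rank f by rewrite muln_gt0 expn_gt0.
  have hT' : 4 * (2 * 4 ^ rank f) <= T by move: hT; rewrite expnS; lia.
  split=> [[q [vq S]]|[q [vq S]]].
    have [q2 [vq2 R2]] := step_path n10 m10 n20 m20 p T0 (Rel_weak R hT') vq.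
    exists q2; split=> //.
    by apply/(IH WL _ _ _ _ n10 m10 n20 m20 _ _ _ _ _ _ _ (leqnn _) V R2).
  have [q2 [vq2 R2]] := step_path n20 m20 n10 m10 p T0 (Rel_sym (Rel_weak R hT')) vq.
  exists q2; split=> //.
  by apply/(IH WL _ _ _ _ n10 m10 n20 m20 _ _ _ _ _ _ _ (leqnn _) V (Rel_sym R2)).
Qed.

End Main.


Section Q.
Variables (Sigma : finType) (Did Dprop : Type).

Definition fconj (f g : form Sigma) := FNot (FOr (FNot f) (FNot g)).
Definition ffirst (x : posvar) : form Sigma := FNot (FExPos (9, x.2) (@FLt Sigma (9, x.2) x)).
Definition flast (x : posvar) : form Sigma := FNot (FExPos (9, x.2) (@FLt Sigma x (9, x.2))).

Definition qbody : form Sigma :=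
   (fconj (ffirst (0,2)) (fconj (flast (1,2)) (fconj (ffirst (0,3)) (fconj (flast (1,3))
   (fconj (@FEqId Sigma (0,2) (0,0)) (fconj (@FEqId Sigma (1,2) (0,1)) (fconj (@FEqId Sigma (0,3) (0,0))
   (fconj (@FEqId Sigma (1,3) (0,1)) (FOr (@FLt Sigma (1,2) (1,3)) (@FLt Sigma (1,3) (1,2))))))))))).

Definition qphi : form Sigma :=
  FExPath 2 (FExPath 3 (FExPos (0,2) (FExPos (1,2) (FExPos (0,3) (FExPos (1,3)
   (FExPos (0,0) (FExPos (0,1) qbody))))))).

Lemma qphi_wf : wf [:: 0; 1] [::] qphi.
Proof. by []. Qed.

Lemma sat_conj (G : DataGraph Sigma Did Dprop) (rho : nat -> gpath G) (sg : posvar -> nat) f g :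
  sat rho sg (fconj f g) <-> sat rho sg f /\ sat rho sg g.
Proof.
rewrite /fconj /=; split.
  move=> H; split; apply: NNPP => H1; apply: H; by [left|right].
by case=> H1 H2 [].
Qed.

Lemma sat_first (G : DataGraph Sigma Did Dprop) (rho : nat -> gpath G) (sg : posvar -> nat) l p :
  sat (G := G) rho sg (ffirst (l, p)) <-> (l, p) = (9, p) \/ sg (l, p) = 0.
Proof.
rewrite /ffirst /= /updl eqxx.
case: ((l, p) =P (9, p)) => [e|ne].
  split=> [_|_ [k [_ ?]]]; [by left|lia].
split=> [H|[//|e] [k [_ hk]]]; last by lia.
right; apply: NNPP => H1; apply: H; exists 0; split=> //; lia.
Qed.

Lemma sat_last (G : DataGraph Sigma Did Dprop) (rho : nat -> gpath G) (sg : posvar -> nat) l p :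
  l != 9 ->
  sat (G := G) rho sg (flast (l, p)) <-> plen (rho p) <= sg (l, p).
Proof.
move=> l9; rewrite /flast /= /updl eqxx.
have ne : (l, p) == (9, p) = false by rewrite xpair_eqE (negbTE l9).
rewrite ne; split=> [H|h [k [hk lt]]]; last by lia.
apply: NNPP => H1; apply: H; exists (plen (rho p)); split=> //; lia.
Qed.


Lemma body_sem (G : DataGraph Sigma Did Dprop) (rho : nat -> gpath G) (sg : posvar -> nat) :
  sat rho sg qbody <->
  [/\ sg (0,2) = 0 /\ plen (rho 2) <= sg (1,2), sg (0,3) = 0 /\ plen (rho 3) <= sg (1,3),
   [/\ pnode (rho 2) (sg (0,2)) = pnode (rho 0) (sg (0,0)),
       pnode (rho 2) (sg (1,2)) = pnode (rho 1) (sg (0,1)),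
       pnode (rho 3) (sg (0,3)) = pnode (rho 0) (sg (0,0)) &
       pnode (rho 3) (sg (1,3)) = pnode (rho 1) (sg (0,1))] &
   sg (1,2) < sg (1,3) \/ sg (1,3) < sg (1,2)].
Proof.
rewrite /qbody !sat_conj !sat_first !sat_last //=.
split.
  by case=> [[//|a] [b [[//|c] [d [e [f [g [h i]]]]]]]].
by case=> [[a b] [c d] [e f g h] i]; do ?split=> //; right.
Qed.

Lemma qphi_sem (G : DataGraph Sigma Did Dprop) (s t : node G) :
  sat (init_env s t) (fun _ => 0) qphi <-> two_paths_diff_len s t.
Proof.
split.
  move=> [p [vp [q [vq [k [hk [k0 [hk0 [k1 [hk1 [k2 [hk2 [k3 [hk3 [k4 [hk4 H]]]]]]]]]]]]]]]].
  move/body_sem: H; rewrite /updl /updp /=.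
  move: hk hk0 hk1 hk2 hk3 hk4; rewrite /updp /init_env /= /plen /=.
  move=> hk hk0 hk1 hk2 hk3 hk4 [[e0 l0] [e1 l1] [n1 n2 n3 n4] d].
  have ek3 : k3 = 0 by lia.
  have ek4 : k4 = 0 by lia.
  have ek0 : k0 = size (psteps p) by lia.
  have ek2 : k2 = size (psteps q) by lia.
  subst k k1 k3 k4 k0 k2.
  exists p, q; split=> //; rewrite ?pendE //.
  split; [exact: n3 | by rewrite /plen n4 | rewrite /plen; lia].
case=> p [q [vp vq sp ep [sq eq ne]]].
exists p; split=> //; exists q; split=> //.
exists 0; split=> //; exists (plen p); split; first by rewrite /updp /=.
exists 0; split=> //; exists (plen q); split; first by rewrite /updp /=.
exists 0; split=> //; exists 0; split=> //.
apply/body_sem; rewrite /updl /updp /init_env /=.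
split=> //.
split.
- by rewrite /pnode /= -sp.
- by rewrite -pendE ep.
- by rewrite /pnode /= -sq.
- by rewrite -pendE eq.
lia.
Qed.
End Q.


Section Fin.
Variables (Sigma : finType) (Did Dprop : Type) (c0 : Sigma) (fid : nat -> Did)
  (fid_inj : injective fid) (d0 : Dprop).

Local Notation G n m := (HG c0 fid_inj d0 n m).

Lemma hrep_single n m (v : node (G n m)) c o :
  o <= lenc n m c -> v = pos n m c o -> hrep (single v) c o.
Proof.
move=> h ->; split=> //; rewrite /plen /=; first lia.
by move=> k; rewrite leqn0 => /eqP ->; rewrite addn0.
Qed.

Lemma G1_false N (N0 : 0 < N) :
  ~ two_paths_diff_len (pos N N true 0 : node (G N N)) (pos N N true N).
Proof.
have key : forall p : gpath (G N N), valid_path p -> pstart p = pos N N true 0 ->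
    pend p = pos N N true N -> plen p = N.
  move=> p vp sp ep; have [c [o [h1 h2 h3]]] := valid_repr N0 N0 vp.
  have e0 : pnode p 0 = pstart p by [].
  rewrite -e0 h2 // addn0 in sp.
  have lc : lenc N N c = N by case: (c).
  have b1 : o <= lenc N N c by lia.
  have b2 : 0 <= lenc N N true by [].
  move/(pos_inj N0 N0 b1 b2): sp => sp.
  have o0 : o = 0 by case: sp => [[_ ->]|[[-> _]|[_ h]]] //; move: h; rewrite /lenc; lia.
  subst o; rewrite pendE h2 // add0n in ep.
  have b3 : plen p <= lenc N N c by lia.
  have b4 : N <= lenc N N true by [].
  move/(pos_inj N0 N0 b3 b4): ep => ep.
  by case: ep => [[_ ->]|[[-> h]|[-> _]]] //; move: h; rewrite /lenc; lia.
case=> p [q [vp vq sp ep [sq eq ne]]].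
by apply: ne; rewrite (key p) // (key q).
Qed.

Lemma G2_true N (N0 : 0 < N) :
  two_paths_diff_len (pos N N.+1 true 0 : node (G N N.+1)) (pos N N.+1 true N).
Proof.
have [p [vp [h1 h2 h3] lp]] := mk_path c0 fid_inj d0 N0 (ltn0Sn N) (c := true) (o := 0) (L := N) (leqnn _).
have [q [vq [g1 g2 g3] lq]] := mk_path c0 fid_inj d0 N0 (ltn0Sn N) (c := false) (o := 0) (L := N.+1) (leqnn _).
exists p, q; split=> //.
- by have := h2 0 (leq0n _).
- by rewrite pendE h2 ?lp.
split.
- by have := g2 0 (leq0n _).
- rewrite pendE g2 ?lq // add0n.
  have b1 : N.+1 <= lenc N N.+1 false by [].
  have b2 : N <= lenc N N.+1 true by [].
  by apply/(pos_inj N0 (ltn0Sn N) b1 b2); right; right.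
- by rewrite lp lq; lia.
Qed.

Lemma close_same T a b : close T a b a b.
Proof. rewrite /close; lia. Qed.

Lemma init_rel N T : 0 < N -> T <= N ->
  Rel T [:: 0; 1] [::] (init_env (pos N N true 0 : node (G N N)) (pos N N true N)) (fun _ => 0)
    (init_env (pos N N.+1 true 0 : node (G N N.+1)) (pos N N.+1 true N)) (fun _ => 0).
Proof.
move=> N0 TN.
exists (fun _ => true), (fun p => if p == 0 then 0 else N), (fun p => if p == 0 then 0 else N).
split.
- move=> p; rewrite !inE => /orP [/eqP ->|/eqP ->]; rewrite /init_env /=;
    by split; apply: hrep_single => //; rewrite /lenc //.
- by [].
have pl : forall n m (s t : node (G n m)) p, plen (init_env s t p) = 0.
  by move=> n m s t p; rewrite /init_env; case: (p == 0).
case.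
  move=> u v [Iu Cu] [Iv Cv].
  have E : forall w, chn (fun _ => true) w = true ->
      idx (init_env (pos N N true 0 : node (G N N)) (pos N N true N)) (fun _ => 0)
        (fun p => if p == 0 then 0 else N) w =
      idx (init_env (pos N N.+1 true 0 : node (G N N.+1)) (pos N N.+1 true N)) (fun _ => 0)
        (fun p => if p == 0 then 0 else N) w.
    by case=> [p|p|x|b|b] //= Cw; rewrite ?pl // Cw.
  by rewrite (E u Cu) (E v Cv); apply: close_same.
have F : forall w, inP [:: 0; 1] [::] w -> chn (fun _ => true) w = false -> w = PZ false \/ w = PL false.
  by case=> [p|p|x|[]|[]] //= _ _; [left|right].
move=> u v [Iu Cu] [Iv Cv].
by case: (F u Iu Cu) => ->; case: (F v Iv Cv) => ->; rewrite /close /= /lenc; lia.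
Qed.

End Fin.


Theorem mainTheorem15 (Sigma : finType) (Did Dprop : Type) :
  0 < #|Sigma| -> infinite_type Did -> infinite_type Dprop ->
  (forall Q : query Sigma Did Dprop, WL_expressible Q -> MWL_expressible Q) /\
  MWL_expressible (@two_paths_diff_len Sigma Did Dprop) /\
  ~ WL_expressible (@two_paths_diff_len Sigma Did Dprop).
Proof.
move=> hS [fid fid_inj] [g _].
have /card_gt0P [c0 _] := hS.
pose d0 := g 0.
split; first by move=> Q [phi [/andP [H1 H2] H3]]; exists phi; split=> //; rewrite H2.
split.
  exists (qphi Sigma); split; first by rewrite qphi_wf.
  move=> G s t; exact: qphi_sem.
case=> phi [/andP [W V] Hq].
have N0 : 0 < 2 * 4 ^ rank phi by rewrite muln_gt0 expn_gt0.
have R := init_rel c0 fid_inj d0 N0 (leqnn _).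
have H := main_inv W N0 N0 N0 (ltn0Sn _) (leqnn _) V R.
have h1 := Hq _ (pos (2 * 4 ^ rank phi) (2 * 4 ^ rank phi) true 0 : node (HG c0 fid_inj d0 _ _))
   (pos (2 * 4 ^ rank phi) (2 * 4 ^ rank phi) true (2 * 4 ^ rank phi)).
have h2 := Hq _ (pos (2 * 4 ^ rank phi) (2 * 4 ^ rank phi).+1 true 0 : node (HG c0 fid_inj d0 _ _))
   (pos (2 * 4 ^ rank phi) (2 * 4 ^ rank phi).+1 true (2 * 4 ^ rank phi)).
apply: (G1_false (c0:=c0) (fid_inj:=fid_inj) (d0:=d0) N0); apply/h1/H/h2.
exact: (G2_true c0 fid_inj d0 N0).
Qed.
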